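(* Let $n\ge1$ be odd and $m\ge 2$ be even. Then every $\mathbf{v}\in\mathbb{Z}_m^n$ that has a predecessor has exactly two predecessors. Moreover, if $(x_1,\dots,x_n)$ is one predecessor of $\mathbf{v}$, then the other is $(\tfrac m2+x_1,\tfrac m2+x_2,\dots,\tfrac m2+x_n)$ (entries mod $m$).
   Context: The Ducci function $D:\mathbb{Z}_m^n\to\mathbb{Z}_m^n$ is $D(x_1,\dots,x_n)=(x_1+x_2,\,x_2+x_3,\,\dots,\,x_{n-1}+x_n,\,x_n+x_1)$, entries mod $m$. A predecessor of $\mathbf{v}$ is any $\mathbf{w}\in\mathbb{Z}_m^n$ with $D(\mathbf{w})=\mathbf{v}$. *)

(* Defs.v *)
From mathcomp Require Import all_boot all_algebra.
Set Implicit Arguments. Unset Strict Implicit. Unset Printing Implicit Defensive.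
Import GRing.Theory.
Local Open Scope ring_scope.

(* Vectors in Z_m^n are finite functions 'I_n -> 'Z_m (requires 1 < m). *)
Definition ducci (n m : nat) (x : {ffun 'I_n -> 'Z_m}) : {ffun 'I_n -> 'Z_m} :=
  [ffun i => x i + x (ordS i)].

Definition preds (n m : nat) (v : {ffun 'I_n -> 'Z_m}) : {set {ffun 'I_n -> 'Z_m}} :=
  [set w | ducci w == v].

Definition shift_half (n m : nat) (x : {ffun 'I_n -> 'Z_m}) : {ffun 'I_n -> 'Z_m} :=
  [ffun i => (m %/ 2)%:R + x i].

(* Main.v *)
Require Import Defs.
From mathcomp Require Import all_boot all_algebra.
From mathcomp Require Import zify ring.
Import GRing.Theory.

Section Aux.
Local Open Scope ring_scope.

Lemma alt_const (V : zmodType) (n : nat) (d : 'I_n.+1 -> V) :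
  odd n.+1 -> (forall i, d i + d (ordS i) = 0) ->
  (forall i, d i = d ord0) /\ d ord0 + d ord0 = 0.
Proof.
move=> hodd H.
have step : forall k, (k < n.+1)%N -> d (inord k) = if odd k then - d ord0 else d ord0.
  elim=> [|k IH] hk.
    by congr d; apply: val_inj; rewrite /= inordK.
  have e : ordS (inord k : 'I_n.+1) = inord k.+1.
    apply: val_inj; rewrite /= !inordK ?modn_small //; lia.
  have := H (inord k); rewrite e IH; last lia; rewrite addrC.
  move/eqP; rewrite addr_eq0 => /eqP ->.
  by rewrite /=; case: (odd k); rewrite ?opprK.
have hw : ordS (inord n : 'I_n.+1) = ord0.
  apply: val_inj; rewrite /= inordK // modnn //.
have h0 : d ord0 + d ord0 = 0.
  have := H (inord n); rewrite hw step //.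
  by move: hodd => /= /negbTE ->.
split=> // i.
have -> : i = inord i by apply: val_inj; rewrite /= inordK.
rewrite step //; case: (odd i) => //.
by apply/eqP; rewrite eq_sym -addr_eq0 h0.
Qed.
End Aux.

Section Half.
Local Open Scope ring_scope.
Variables (m : nat) (hm : (1 < m)%N) (hev : ~~ odd m).

Let h : 'Z_m := (m %/ 2)%:R.

Lemma hh : h + h = 0.
Proof.
rewrite /h -natrD.
have -> : (m %/ 2 + m %/ 2 = m)%N.
  have := modn2 m; rewrite (negbTE hev) => e.
  have := divn_eq m 2; rewrite e; lia.
exact: pchar_Zp.
Qed.

Lemma valh : val h = (m %/ 2)%N.
Proof. rewrite /h /= val_Zp_nat // modn_small //; have := leq_div m 2. lia. Qed.

Lemma hneq0 : h != 0.
Proof.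
apply/eqP => /(congr1 val); rewrite valh /=.
have := modn2 m; rewrite (negbTE hev) => e.
have := divn_eq m 2; rewrite e; lia.
Qed.

Lemma two_tors (c : 'Z_m) : c + c = 0 -> c = 0 \/ c = h.
Proof.
move=> H.
have lt : (val c < m)%N by have := ltn_ord c; rewrite [X in (_ < X)%N]Zp_cast.
have e2 : ((val c + val c) %% m = 0)%N.
  have := congr1 (fun z : 'Z_m => nat_of_ord z) H; rewrite -[c in c + c]natr_Zp -natrD /= val_Zp_nat //.
have := modn2 m; rewrite (negbTE hev) => e.
have dm := divn_eq m 2; rewrite e in dm.
have : (val c = 0 \/ val c = m %/ 2)%N.
  have : (m %| val c + val c)%N by apply/dvdnP; exists ((val c + val c) %/ m)%N; have := divn_eq (val c + val c) m; lia.
  move/dvdnP => [q hq].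
  have : (q = 0 \/ q = 1)%N by nia.
  by case=> hq0; rewrite hq0 in hq; lia.
by case=> hc; [left|right]; apply: val_inj; rewrite hc ?valh.
Qed.
End Half.

Theorem theorem2p1 (n m : nat) (hn : (1 <= n)%N) (hnodd : odd n)
  (hm : (2 <= m)%N) (hmeven : ~~ odd m) (v : {ffun 'I_n -> 'Z_m}) :
  (exists w, ducci w = v) ->
  #|preds v| = 2 /\
  (forall x, ducci x = v -> preds v = [set x; shift_half x] /\ shift_half x != x).
Proof.
case: n hn hnodd v => [//|n] _ hodd v.
have key : forall x, ducci x = v -> preds v = [set x; shift_half x] /\ shift_half x != x.
  move=> x hx; split.
    apply/setP => y; rewrite !inE -hx.
    apply/idP/idP.
      move/eqP => hy.
      pose d i := (y i - x i)%R.
      have hd : forall i, (d i + d (ordS i) = 0)%R.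
        move=> i; have := congr1 (fun f : {ffun _ -> _} => f i) hy; rewrite /ducci !ffunE /d => e.
        by rewrite addrACA -opprD e subrr.
      have [hc h0] := @alt_const _ _ _ hodd hd.
      case: (@two_tors _ hm hmeven _ h0) => hc0; apply/orP; [left|right]; apply/eqP/ffunP => i;
        rewrite ?ffunE; have := hc i; rewrite hc0 /d => /eqP; rewrite subr_eq => /eqP ->;
        rewrite ?add0r // addrC.
    case/orP => /eqP ->; first by [].
    apply/eqP/ffunP => i; rewrite /ducci /shift_half !ffunE.
    by rewrite addrACA (@hh _ hm hmeven) add0r.
  apply/eqP => /ffunP /(_ ord0); rewrite ffunE.
  move/(congr1 (fun z => (z - x ord0)%R)); rewrite addrK subrr => e.
  by move: (@hneq0 _ hm hmeven); rewrite e eqxx.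
move=> [w hw]; split => //.
have [-> hne] := key w hw.
by rewrite cards2 eq_sym hne.
Qed.
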